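(* Let $\mathcal M=(M,<,+,0,\ldots)$ be a definably complete locally o-minimal expansion of an ordered abelian group. Let $C$ be a definable set, $s>0$, and let $\{f_t:C\to M\}_{0<t<s}$ be a definable family of pointwise bounded functions. Then the family is pointwise convergent.
   Context: Definable = with parameters; definably complete and locally o-minimal as standard. A definable family $\{f_t\}_{0<t<s}$ is given by a definable $F:C\times(0,s)\to M$ with $f_t(x)=F(x,t)$. It is pointwise bounded if for every $x\in C$ there is $N>0$ with $|f_t(x)|<N$ for all $t\in(0,s)$. It is pointwise convergent if for every $\varepsilon>0$ and $x\in C$ there is $s'>0$ such that $|f_t(x)-f_{t'}(x)|<\varepsilon$ for all $t,t'\in(0,s')$. *)

(* Defs.v *)
From Stdlib Require Import List Arith.
Import ListNotations.
Set Implicit Arguments.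

Record OAG := {
  car :> Type;
  zero : car;
  add : car -> car -> car;
  opp : car -> car;
  lt : car -> car -> Prop;
  addA : forall x y z, add x (add y z) = add (add x y) z;
  addC : forall x y, add x y = add y x;
  add0 : forall x, add zero x = x;
  addN : forall x, add (opp x) x = zero;
  lt_irr : forall x, ~ lt x x;
  lt_trans : forall x y z, lt x y -> lt y z -> lt x z;
  lt_total : forall x y, lt x y \/ x = y \/ lt y x;
  lt_add : forall x y z, lt x y -> lt (add x z) (add y z)
}.

Definition sub {M : OAG} (x y : M) : M := add M x (opp M y).
Definition abs_lt {M : OAG} (x e : M) : Prop := lt M (opp M e) x /\ lt M x e.

(* A (first-order) structure on M with parameters, in the sense of van den Dries:
   Def n A  means  A (a set of tuples = lists of length n) is definable. *)
Record structure (M : OAG) := {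
  Def : nat -> (list M -> Prop) -> Prop;
  Def_ext : forall n (A B : list M -> Prop),
      (forall x, A x <-> B x) -> Def n A -> Def n B;
  Def_len : forall n A, Def n A -> forall x, A x -> length x = n;
  Def_empty : forall n, Def n (fun _ => False);
  Def_compl : forall n A, Def n A -> Def n (fun x => length x = n /\ ~ A x);
  Def_union : forall n A B, Def n A -> Def n B -> Def n (fun x => A x \/ B x);
  Def_prodr : forall n A, Def n A ->
      Def (S n) (fun x => exists y a, x = y ++ [a] /\ A y);
  Def_prodl : forall n A, Def n A ->
      Def (S n) (fun x => exists a y, x = a :: y /\ A y);
  Def_diag : forall n i j, i < j < n ->
      Def n (fun x => length x = n /\ nth i x (zero M) = nth j x (zero M));
  Def_proj : forall n A, Def (S n) A -> Def n (fun y => exists a, A (y ++ [a]));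
  (* expansion of the ordered group (M,<,+,0) *)
  Def_lt : Def 2 (fun x => exists a b, x = [a; b] /\ lt M a b);
  Def_add : Def 3 (fun x => exists a b, x = [a; b; add M a b]);
  Def_zero : Def 1 (fun x => x = [zero M]);
  (* parameters allowed *)
  Def_point : forall a : M, Def 1 (fun x => x = [a])
}.

Definition Def1 (M : OAG) (S : structure M) (X : M -> Prop) : Prop :=
  Def S 1 (fun x => exists a, x = [a] /\ X a).

Definition definably_complete (M : OAG) (S : structure M) : Prop :=
  forall X : M -> Prop, Def1 S X -> (exists a, X a) ->
    (exists b, forall x, X x -> ~ lt M b x) ->
    exists b, (forall x, X x -> ~ lt M b x) /\
              (forall c, (forall x, X x -> ~ lt M c x) -> ~ lt M c b).

Definition locally_o_minimal (M : OAG) (S : structure M) : Prop :=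
  forall (X : M -> Prop) (a : M), Def1 S X ->
    exists b c, lt M b a /\ lt M a c /\
      exists (pts : list M) (ivs : list (M * M)),
        forall x, (lt M b x /\ lt M x c /\ X x) <->
          (In x pts \/ exists p, In p ivs /\ lt M (fst p) x /\ lt M x (snd p)).

(* Main.v *)
Require Import Defs.
From Stdlib Require Import List Arith Lia Classical.
Import ListNotations.
Set Warnings "-deprecated".

Lemma app_eq_len {A : Type} (l1 l2 m1 m2 : list A) :
  l1 ++ l2 = m1 ++ m2 -> length l1 = length m1 -> l1 = m1 /\ l2 = m2.
Proof.
  revert m1; induction l1 as [|a l1 IH]; intros [|b m1] H Hl; simpl in *; try discriminate; auto.
  injection H as -> H. destruct (IH m1 H) as [-> ->]; auto.
Qed.

Section D.
Context {M : OAG} (S : structure M).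
Notation z0 := (zero M).

Lemma def_inter n A B : Def S n A -> Def S n B -> Def S n (fun x => A x /\ B x).
Proof.
  intros HA HB.
  pose proof (Def_compl S _ _ (Def_union S _ _ _ (Def_compl S _ _ HA) (Def_compl S _ _ HB))) as H.
  eapply Def_ext; [|exact H]. intro x; split.
  - intros [Hl Hn]. split; apply NNPP; intro Hc; apply Hn; tauto.
  - intros [Ha Hb]. split. exact (Def_len S _ _ HA x Ha). tauto.
Qed.

Lemma def_full n : Def S n (fun x => length x = n).
Proof.
  eapply Def_ext; [|exact (Def_compl S _ _ (Def_empty S n))]. intro x; tauto.
Qed.

Lemma def_compl' n A : Def S n A -> Def S n (fun x => length x = n /\ ~ A x).
Proof. apply Def_compl. Qed.

Lemma def_prodl_iter n A k : Def S n A ->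
  Def S (k + n) (fun z => exists l y, z = l ++ y /\ length l = k /\ A y).
Proof.
  intro HA. induction k as [|k IH].
  - eapply Def_ext; [|exact HA]. intro x; split.
    + intro H; exists [], x; auto.
    + intros (l & y & -> & Hl & Hy). destruct l; [exact Hy| discriminate].
  - eapply Def_ext; [|exact (Def_prodl S _ _ IH)]. intro x; split.
    + intros (a & y & -> & l & w & -> & Hl & Hw). exists (a :: l), w. simpl; auto.
    + intros (l & y & -> & Hl & Hy). destruct l as [|a l]; [discriminate|].
      exists a, (l ++ y). split; [reflexivity|]. exists l, y. simpl in Hl. auto.
Qed.

Lemma def_proj_iter n k A : Def S (n + k) A ->
  Def S n (fun y => exists l, length l = k /\ A (y ++ l)).
Proof.
  revert n A. induction k as [|k IH]; intros n A HA.
  - rewrite Nat.add_0_r in HA. eapply Def_ext; [|exact HA]. intro x; split.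
    + intro H; exists []; rewrite app_nil_r; auto.
    + intros (l & Hl & H). destruct l; [rewrite app_nil_r in H; exact H| discriminate].
  - rewrite Nat.add_succ_r in HA. pose proof (IH _ _ (Def_proj S _ _ HA)) as H.
    eapply Def_ext; [|exact H]. intro y; split.
    + intros (l & Hl & a & Ha). exists (l ++ [a]). rewrite app_length, Hl; simpl.
      rewrite app_assoc. split; [lia| exact Ha].
    + intros (l & Hl & H1). destruct (exists_last (l:=l)) as (l' & a & ->).
      { intros ->; discriminate. }
      rewrite app_length in Hl; simpl in Hl. exists l'. split; [lia|].
      exists a. rewrite <- app_assoc. exact H1.
Qed.

Lemma def_lift1 (P : M -> Prop) K i :
  Def S 1 (fun w => exists a, w = [a] /\ P a) -> i < K ->
  Def S K (fun z => length z = K /\ P (nth i z z0)).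
Proof.
  intros HP Hi.
  pose proof (def_prodl_iter _ _ K HP) as H1.
  assert (Hd : i < K < K + 1) by lia.
  pose proof (def_inter _ _ _ H1 (Def_diag S Hd)) as H2.
  pose proof (def_proj_iter K 1 _ H2) as H3.
  eapply Def_ext; [|exact H3]. intro y; split.
  - intros (l & Hl & (l' & w & Heq & Hl' & a & -> & Ha) & Hlen & Hn).
    assert (Hy : length y = K).
    { rewrite app_length in Hlen. lia. }
    split; [exact Hy|].
    rewrite app_nth1 in Hn by lia. rewrite app_nth2 in Hn by lia.
    rewrite Hy, Nat.sub_diag in Hn. rewrite Hn.
    destruct l as [|b [|c l]]; try discriminate.
    apply app_inj_tail in Heq. destruct Heq as [_ ->]. exact Ha.
  - intros [Hy HPy]. exists ([nth i y z0]). split; [reflexivity|]. split.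
    + exists y, ([nth i y z0]). repeat split; auto.
      exists (nth i y z0); auto.
    + split. rewrite app_length, Hy; simpl; lia.
      rewrite app_nth1 by lia. rewrite app_nth2 by lia. rewrite Hy, Nat.sub_diag. reflexivity.
Qed.

Lemma def_lift2 (R : M -> M -> Prop) K i j :
  Def S 2 (fun w => exists a b, w = [a; b] /\ R a b) -> i < K -> j < K ->
  Def S K (fun z => length z = K /\ R (nth i z z0) (nth j z z0)).
Proof.
  intros HR Hi Hj.
  pose proof (def_prodl_iter _ _ K HR) as H1.
  assert (Hd1 : i < K < K + 2) by lia.
  assert (Hd2 : j < K + 1 < K + 2) by lia.
  pose proof (def_inter _ _ _ (def_inter _ _ _ H1 (Def_diag S Hd1)) (Def_diag S Hd2)) as H2.
  pose proof (def_proj_iter K 2 _ H2) as H3.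
  eapply Def_ext; [|exact H3]. intro y; split.
  - intros (l & Hl & ((l' & w & Heq & Hl' & a & b & -> & Hab) & Hlen & Hn1) & _ & Hn2).
    assert (Hy : length y = K). { rewrite app_length in Hlen. lia. }
    split; [exact Hy|].
    assert (Hyl : y = l' /\ l = [a; b]).
    { apply app_eq_len in Heq; [exact Heq| congruence]. }
    destruct Hyl as [<- ->].
    rewrite app_nth1 in Hn1 by lia. rewrite app_nth2 in Hn1 by lia.
    rewrite app_nth1 in Hn2 by lia. rewrite app_nth2 in Hn2 by lia.
    rewrite Hy, Nat.sub_diag in Hn1. rewrite Hy in Hn2. replace (K+1-K) with 1 in Hn2 by lia.
    simpl in Hn1, Hn2. rewrite Hn1, Hn2. exact Hab.
  - intros [Hy HRy]. exists ([nth i y z0; nth j y z0]). split; [reflexivity|].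
    assert (E1 : nth i (y ++ [nth i y z0; nth j y z0]) z0 = nth i y z0) by (apply app_nth1; lia).
    assert (E2 : nth j (y ++ [nth i y z0; nth j y z0]) z0 = nth j y z0) by (apply app_nth1; lia).
    assert (E3 : nth K (y ++ [nth i y z0; nth j y z0]) z0 = nth i y z0)
      by (rewrite app_nth2 by lia; rewrite Hy, Nat.sub_diag; reflexivity).
    assert (E4 : nth (K+1) (y ++ [nth i y z0; nth j y z0]) z0 = nth j y z0)
      by (rewrite app_nth2 by lia; rewrite Hy; replace (K+1-K) with 1 by lia; reflexivity).
    assert (El : length (y ++ [nth i y z0; nth j y z0]) = K + 2) by (rewrite app_length, Hy; simpl; lia).
    rewrite E1, E2, E3, E4, El. repeat split; auto.
    exists y, ([nth i y z0; nth j y z0]). repeat split; auto.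
    exists (nth i y z0), (nth j y z0). auto.
Qed.
End D.
Section D2.
Context {M : OAG} (S : structure M).
Notation z0 := (zero M).

Lemma def_pt a : Def S 1 (fun w => exists b, w = [b] /\ b = a).
Proof.
  eapply Def_ext; [|exact (Def_point S a)]. intro w; split.
  - intros ->; eauto.
  - intros (b & -> & ->); reflexivity.
Qed.

Lemma def_nltset : Def S 2 (fun w => exists a b, w = [a; b] /\ ~ lt M a b).
Proof.
  eapply Def_ext; [|exact (Def_compl S _ _ (Def_lt S))]. intro w; split.
  - intros [Hl Hn]. destruct w as [|a [|b [|c w]]]; try discriminate.
    exists a, b; split; auto. intro H; apply Hn; eauto.
  - intros (a & b & -> & H). split; [reflexivity|]. intros (a' & b' & E & H').
    injection E as -> ->. auto.
Qed.

Lemma def1_compl (P : M -> Prop) : Def S 1 (fun w => exists a, w = [a] /\ P a) ->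
  Def S 1 (fun w => exists a, w = [a] /\ ~ P a).
Proof.
  intro HP. eapply Def_ext; [|exact (Def_compl S _ _ HP)]. intro w; split.
  - intros [Hl Hn]. destruct w as [|a [|b w]]; try discriminate.
    exists a; split; auto. intro H; apply Hn; eauto.
  - intros (a & -> & H). split; [reflexivity|]. intros (a' & E & H').
    injection E as ->. auto.
Qed.

Lemma def_gtc c : Def S 1 (fun w => exists a, w = [a] /\ lt M c a).
Proof.
  assert (H1 : 1 < 3) by lia. assert (H2 : 2 < 3) by lia. assert (Hd : 0 < 2 < 3) by lia.
  pose proof (def_inter S _ _ _ (def_inter S _ _ _
    (def_lift2 S (lt M) 3 1 2 (Def_lt S) H1 H2) (def_lift1 S (fun b => b = c) 3 1 (def_pt c) H1))
    (Def_diag S Hd)) as H.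
  pose proof (def_proj_iter S 1 2 _ H) as H'.
  eapply Def_ext; [|exact H']. intro y; split.
  - intros (l & Hl & ((Hlen & Hlt) & _ & Hc) & _ & Hd').
    destruct y as [|a [|b y]]; try (simpl in Hlen; rewrite length_app in Hlen; simpl in Hlen; lia).
    destruct l as [|p [|q [|r l]]]; try discriminate. simpl in *.
    exists a; split; auto. subst. congruence.
  - intros (a & -> & Ha). exists [c; a]. simpl. repeat split; auto.
Qed.

Lemma def_fix (x : list M) K off : off + length x <= K ->
  Def S K (fun z => length z = K /\ forall i, i < length x -> nth (off + i) z z0 = nth i x z0).
Proof.
  intro Hle.
  assert (G : forall m, m <= length x ->
    Def S K (fun z => length z = K /\ forall i, i < m -> nth (off + i) z z0 = nth i x z0)).
  { induction m as [|m IH]; intro Hm.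
    - eapply Def_ext; [|exact (def_full S K)]. intro z; split; [intro; split; auto; intros; lia| tauto].
    - assert (Hlt : off + m < K) by lia.
      pose proof (def_inter S _ _ _ (IH ltac:(lia)) (def_lift1 S (fun b => b = nth m x z0) K (off+m) (def_pt _) Hlt)) as H.
      eapply Def_ext; [|exact H]. intro z; split.
      + intros [[Hz Hi] [_ Hm']]. split; auto. intros i Hi'.
        destruct (Nat.eq_dec i m) as [->|Hne]; auto. apply Hi; lia.
      + intros [Hz Hi]. repeat split; auto. }
  apply G; lia.
Qed.
End D2.

Lemma nth_app_r' {A} (l m : list A) i d : nth (length l + i) (l ++ m) d = nth i m d.
Proof. rewrite app_nth2 by lia. f_equal; lia. Qed.

Lemma def_X (M : OAG) (S : structure M) n (C : list M -> Prop) (s : M) (F : list M -> M -> M)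
  (hC : Def S n C)
  (hF : Def S (n + 2) (fun z => exists x t,
          z = x ++ [t; F x t] /\ C x /\ lt M (zero M) t /\ lt M t s))
  x (Cx : C x) c :
  Def1 S (fun t => lt M (zero M) t /\ lt M t s /\ lt M c (F x t)).
Proof.
  pose proof (Def_len S _ _ hC x Cx) as Hn. subst n.
  set (K := 1 + (length x + 2)).
  pose proof (def_prodl_iter S _ _ 1 hF) as H1.
  pose proof (def_fix S x K 1 ltac:(unfold K; lia)) as H2.
  assert (Hd : 0 < length x + 1 < K) by (unfold K; lia).
  pose proof (Def_diag S Hd) as H3.
  pose proof (def_lift1 S (lt M c) K (length x + 2) (def_gtc S c) ltac:(unfold K; lia)) as H4.
  pose proof (def_inter S _ _ _ (def_inter S _ _ _ (def_inter S _ _ _ H1 H2) H3) H4) as H.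
  pose proof (def_proj_iter S 1 (length x + 2) _ H) as H'.
  unfold Def1. eapply Def_ext; [|exact H']. intro y; split.
  - intros (l & Hl & (((l' & w & E & Hl' & x' & t & -> & Cx' & Ht0 & Hts) & _ & Hfix) & _ & Hdg) & Hlen & Hc).
    pose proof (Def_len S _ _ hC x' Cx') as Hx'.
    assert (Hy : length y = 1) by (rewrite length_app in Hlen; unfold K in Hlen; lia).
    destruct (app_eq_len _ _ _ _ E ltac:(congruence)) as [-> ->].
    destruct l' as [|a [|b l']]; try discriminate. clear Hl' Hy.
    assert (Ex : x' = x).
    { apply nth_ext with (d := zero M) (d' := zero M); [congruence|].
      intros i Hi. rewrite <- Hfix by lia. simpl. rewrite app_nth1 by lia. reflexivity. }
    subst x'. exists a. split; [reflexivity|].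
    replace (length x + 1) with (Datatypes.S (length x + 0)) in Hdg by lia.
    replace (length x + 2) with (Datatypes.S (length x + 1)) in Hc by lia.
    simpl in Hdg, Hc.
    rewrite (nth_app_r' x [t; F x t] 0) in Hdg.
    rewrite (nth_app_r' x [t; F x t] 1) in Hc. simpl in Hdg, Hc. subst a. auto.
  - intros (a & -> & Ha0 & Has & Hc). exists (x ++ [a; F x a]).
    split; [rewrite length_app; reflexivity|].
    assert (HL : length ([a] ++ x ++ [a; F x a]) = K) by (simpl; rewrite length_app; simpl; unfold K; lia).
    assert (Hp1 : nth (length x + 1) ([a] ++ x ++ [a; F x a]) (zero M) = a).
    { replace (length x + 1) with (Datatypes.S (length x + 0)) by lia. simpl.
      rewrite (nth_app_r' x [a; F x a] 0). reflexivity. }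
    assert (Hp2 : nth (length x + 2) ([a] ++ x ++ [a; F x a]) (zero M) = F x a).
    { replace (length x + 2) with (Datatypes.S (length x + 1)) by lia. simpl.
      rewrite (nth_app_r' x [a; F x a] 1). reflexivity. }
    rewrite Hp1, Hp2, HL. repeat split; auto.
    + exists [a], (x ++ [a; F x a]). repeat split; auto. exists x, a. auto.
    + intros i Hi. simpl. apply app_nth1. exact Hi.
Qed.

Lemma def_E (M : OAG) (S : structure M) n (C : list M -> Prop) (s : M) (F : list M -> M -> M)
  (hC : Def S n C)
  (hF : Def S (n + 2) (fun z => exists x t,
          z = x ++ [t; F x t] /\ C x /\ lt M (zero M) t /\ lt M t s))
  x (Cx : C x) :
  Def S 2 (fun y => length y = 2 /\ exists t, lt M (zero M) t /\ lt M t s /\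
     lt M t (nth 1 y (zero M)) /\ ~ lt M (nth 0 y (zero M)) (F x t)).
Proof.
  pose proof (Def_len S _ _ hC x Cx) as Hn. subst n.
  set (K := 2 + (length x + 2)).
  pose proof (def_prodl_iter S _ _ 2 hF) as H1.
  pose proof (def_fix S x K 2 ltac:(unfold K; lia)) as H2.
  pose proof (def_lift2 S (lt M) K (length x + 2) 1 (Def_lt S) ltac:(unfold K; lia) ltac:(unfold K; lia)) as H3.
  pose proof (def_lift2 S (fun a b => ~ lt M a b) K 0 (length x + 3) (def_nltset S) ltac:(unfold K; lia) ltac:(unfold K; lia)) as H4.
  pose proof (def_inter S _ _ _ (def_inter S _ _ _ (def_inter S _ _ _ H1 H2) H3) H4) as H.
  pose proof (def_proj_iter S 2 (length x + 2) _ H) as H'.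
  eapply Def_ext; [|exact H']. intro y; split.
  - intros (l & Hl & (((l' & w & E & Hl' & x' & t & -> & Cx' & Ht0 & Hts) & _ & Hfix) & _ & Hlt) & Hlen & Hc).
    pose proof (Def_len S _ _ hC x' Cx') as Hx'.
    assert (Hy : length y = 2) by (rewrite length_app in Hlen; unfold K in Hlen; lia).
    destruct (app_eq_len _ _ _ _ E ltac:(congruence)) as [-> ->].
    destruct l' as [|c [|r [|b l']]]; try discriminate. clear Hl'.
    assert (Ex : x' = x).
    { apply nth_ext with (d := zero M) (d' := zero M); [congruence|].
      intros i Hi. rewrite <- Hfix by lia. simpl. rewrite app_nth1 by lia. reflexivity. }
    subst x'. split; [reflexivity|]. exists t.
    replace (length x + 2) with (Datatypes.S (Datatypes.S (length x + 0))) in Hlt by lia.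
    replace (length x + 3) with (Datatypes.S (Datatypes.S (length x + 1))) in Hc by lia.
    simpl in Hlt, Hc.
    rewrite (nth_app_r' x [t; F x t] 0) in Hlt.
    rewrite (nth_app_r' x [t; F x t] 1) in Hc. simpl in Hlt, Hc. auto.
  - intros [Hy (t & Ht0 & Hts & Htr & Hc)].
    destruct y as [|c [|r [|b y]]]; try discriminate. simpl in Htr, Hc.
    exists (x ++ [t; F x t]).
    split; [rewrite length_app; reflexivity|].
    assert (HL : length ([c; r] ++ x ++ [t; F x t]) = K) by (simpl; rewrite length_app; simpl; unfold K; lia).
    assert (Hp1 : nth (length x + 2) ([c; r] ++ x ++ [t; F x t]) (zero M) = t).
    { replace (length x + 2) with (Datatypes.S (Datatypes.S (length x + 0))) by lia. simpl.
      rewrite (nth_app_r' x [t; F x t] 0). reflexivity. }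
    assert (Hp2 : nth (length x + 3) ([c; r] ++ x ++ [t; F x t]) (zero M) = F x t).
    { replace (length x + 3) with (Datatypes.S (Datatypes.S (length x + 1))) by lia. simpl.
      rewrite (nth_app_r' x [t; F x t] 1). reflexivity. }
    rewrite Hp1, Hp2, HL. repeat split; auto.
    + exists [c; r], (x ++ [t; F x t]). repeat split; auto. exists x, t. auto.
    + intros i Hi. simpl. apply app_nth1. exact Hi.
Qed.

Lemma def_D (M : OAG) (S : structure M) n (C : list M -> Prop) (s : M) (F : list M -> M -> M)
  (hC : Def S n C)
  (hF : Def S (n + 2) (fun z => exists x t,
          z = x ++ [t; F x t] /\ C x /\ lt M (zero M) t /\ lt M t s))
  x (Cx : C x) :
  Def1 S (fun c => exists r, lt M (zero M) r /\ ~ lt M s r /\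
     forall t, lt M (zero M) t -> lt M t r -> lt M c (F x t)).
Proof.
  pose proof (def_E M S n C s F hC hF x Cx) as HE.
  pose proof (def_inter S _ _ _ (def_inter S _ _ _ (Def_compl S _ _ HE)
     (def_lift1 S (lt M (zero M)) 2 1 (def_gtc S _) ltac:(lia)))
     (def_lift1 S (fun v => ~ lt M s v) 2 1 (def1_compl S _ (def_gtc S s)) ltac:(lia))) as H.
  pose proof (Def_proj S 1 _ H) as H'.
  unfold Def1. eapply Def_ext; [|exact H']. intro y; split.
  - intros (r & ((Hlen & HnE) & _ & Hr0) & _ & Hrs).
    rewrite length_app in Hlen; simpl in Hlen.
    destruct y as [|c [|b y]]; simpl in Hlen; try lia.
    simpl in Hr0, Hrs, HnE. exists c; split; [reflexivity|]. exists r. repeat split; auto.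
    intros t Ht0 Htr. apply NNPP; intro Hn. apply HnE. split; [reflexivity|].
    exists t. repeat split; auto.
    assert (Hts : ~ lt M s t) by (intro Hst; apply Hrs; exact (lt_trans M _ _ _ Hst Htr)).
    destruct (lt_total M t s) as [H1|[H1|H1]]; [exact H1| subst; exfalso; exact (Hrs Htr) | contradiction].
  - intros (c & -> & r & Hr0 & Hrs & Hall). exists r. simpl. repeat split; auto.
    intros [_ (t & Ht0 & Hts & Htr & Hn)]. apply Hn. apply Hall; auto.
Qed.
Section G.
Context {M : OAG}.
Notation "0" := (zero M).
Notation "a + b" := (add M a b).
Notation "- a" := (opp M a).
Notation "a < b" := (lt M a b).

Lemma addr0 x : x + 0 = x. Proof. rewrite addC; apply add0. Qed.
Lemma addrN x : x + - x = 0. Proof. rewrite addC; apply addN. Qed.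
Lemma addCA x y z : x + (y + z) = y + (x + z).
Proof. rewrite !addA, (addC M x y). reflexivity. Qed.
Lemma addACA a b c d : (a + b) + (c + d) = (a + c) + (b + d).
Proof. rewrite <- !addA. f_equal. apply addCA. Qed.
Lemma opp_uniq x y : y + x = 0 -> - x = y.
Proof. intro H. rewrite <- (add0 M (- x)), <- H, <- addA, addrN, addr0. reflexivity. Qed.
Lemma oppD a b : - (a + b) = - a + - b.
Proof. apply opp_uniq. rewrite addACA, !addN, add0. reflexivity. Qed.
Lemma oppK a : - - a = a.
Proof. apply opp_uniq. apply addrN. Qed.
Lemma opp0 : - 0 = 0.
Proof. apply opp_uniq. apply add0. Qed.
Lemma lt_addl a b c : a < b -> c + a < c + b.
Proof. intro H. rewrite !(addC M c). apply lt_add; exact H. Qed.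
Lemma nlt_le_lt a b c : a < b -> ~ c < b -> a < c.
Proof.
  intros H1 H2. destruct (lt_total M b c) as [H|[H|H]]; [exact (lt_trans M _ _ _ H1 H)| subst; exact H1| contradiction].
Qed.
Lemma lt_nlt a b c : a < b -> ~ b < c -> a < c \/ a = c \/ True.
Proof. auto. Qed.
Lemma le_lt_add a b c d : ~ b < a -> c < d -> a + c < b + d.
Proof.
  intros H1 H2. destruct (lt_total M a b) as [H|[H|H]].
  - exact (lt_trans M _ _ _ (lt_add M _ _ c H) (lt_addl _ _ b H2)).
  - subst. apply lt_addl; exact H2.
  - contradiction.
Qed.
Lemma lt_opp a b : a < b -> - b < - a.
Proof.
  intro H. pose proof (lt_add M _ _ (- a + - b) H) as H'.
  assert (E1 : a + (- a + - b) = - b) by (rewrite addA, addrN, add0; reflexivity).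
  assert (E2 : b + (- a + - b) = - a) by (rewrite addCA, addrN, addr0; reflexivity).
  rewrite E1, E2 in H'. exact H'.
Qed.
Lemma sub_lt_self L d : 0 < d -> L + - d < L.
Proof.
  intro H. pose proof (lt_addl _ _ L (lt_opp _ _ H)) as H'. rewrite opp0, addr0 in H'. exact H'.
Qed.
Lemma lt_self_add L d : 0 < d -> L < L + d.
Proof. intro H. pose proof (lt_addl _ _ L H) as H'. rewrite addr0 in H'. exact H'. Qed.

Lemma key_bound L d a b e : L + - d < b -> ~ L + d < a -> ~ e < d + d -> a + - b < e.
Proof.
  intros Hb Ha He.
  pose proof (le_lt_add _ _ _ _ Ha (lt_opp _ _ Hb)) as H.
  assert (E : (L + d) + - (L + - d) = d + d).
  { rewrite oppD, oppK, addACA, addrN, add0. reflexivity. }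
  rewrite E in H. exact (nlt_le_lt _ _ _ H He).
Qed.

Lemma sub_opp a b : - (a + - b) = b + - a.
Proof. rewrite oppD, oppK, addC. reflexivity. Qed.

Lemma abs_key L d a b e : L + - d < a -> L + - d < b -> ~ L + d < a -> ~ L + d < b ->
  ~ e < d + d -> abs_lt (sub a b) e.
Proof.
  intros H1 H2 H3 H4 He. unfold abs_lt, sub. split.
  - pose proof (lt_opp _ _ (key_bound L d b a e H1 H4 He)) as H. rewrite sub_opp in H. exact H.
  - exact (key_bound L d a b e H2 H3 He).
Qed.

Lemma half_exists e : 0 < e -> (forall r, 0 < r -> exists t, 0 < t /\ t < r) ->
  exists d, 0 < d /\ ~ e < d + d.
Proof.
  intros He Hd. destruct (Hd e He) as (d0 & Hd0 & Hd0e).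
  destruct (classic (e < d0 + d0)) as [Hlt|Hn]; [|exists d0; auto].
  exists (e + - d0). split.
  - pose proof (lt_add M _ _ (- d0) Hd0e) as H. rewrite addrN in H. exact H.
  - intro Hc. pose proof (lt_add M _ _ (- d0 + - d0) Hlt) as H.
    rewrite <- oppD, addrN in H.
    pose proof (lt_addl _ _ e H) as H2. rewrite addr0 in H2.
    assert (E : e + (e + (- d0 + - d0)) = (e + - d0) + (e + - d0)).
    { rewrite addA, addACA. reflexivity. }
    rewrite oppD, E in H2.
    exact (lt_irr M _ (lt_trans M _ _ _ H2 Hc)).
Qed.
End G.
Section E.
Context {M : OAG} (s : M).
Notation "0" := (zero M).
Notation "a < b" := (lt M a b).

Definition Ev (P : M -> Prop) := exists r, 0 < r /\ ~ s < r /\ forall t, 0 < t -> t < r -> P t.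

Lemma tr_nlt t r r1 : t < r -> ~ r1 < r -> t < r1.
Proof.
  intros H1 H2. destruct (lt_total M r r1) as [H|[H|H]]; [exact (lt_trans M _ _ _ H1 H)| subst; exact H1| contradiction].
Qed.

Lemma nlt_trans a b c : ~ b < a -> ~ c < b -> ~ c < a.
Proof.
  intros H1 H2 H3. destruct (lt_total M a b) as [H|[H|H]].
  - apply H2. exact (lt_trans M _ _ _ H3 H).
  - subst; auto.
  - auto.
Qed.

Lemma min_ex r1 r2 : 0 < r1 -> 0 < r2 -> exists r, 0 < r /\ ~ r1 < r /\ ~ r2 < r.
Proof.
  intros H1 H2. destruct (lt_total M r1 r2) as [H|[H|H]].
  - exists r1. split; auto. split; [apply lt_irr|]. intro H'. exact (lt_irr M _ (lt_trans M _ _ _ H H')).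
  - subst. exists r2. split; auto. split; apply lt_irr.
  - exists r2. split; auto. split; [|apply lt_irr]. intro H'. exact (lt_irr M _ (lt_trans M _ _ _ H H')).
Qed.

Lemma Ev_and P Q : Ev P -> Ev Q -> Ev (fun t => P t /\ Q t).
Proof.
  intros (r1 & H1 & Hs1 & HP) (r2 & H2 & Hs2 & HQ).
  destruct (min_ex r1 r2 H1 H2) as (r & Hr & Hr1 & Hr2).
  exists r. split; auto. split; [exact (nlt_trans _ _ _ Hr1 Hs1)|].
  intros t Ht Htr. split; [apply HP| apply HQ]; auto; eapply tr_nlt; eauto.
Qed.

Lemma Ev_mono (P Q : M -> Prop) : (forall t, 0 < t -> P t -> Q t) -> Ev P -> Ev Q.
Proof. intros H (r & H1 & H2 & H3). exists r; repeat split; auto. Qed.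

Lemma Ev_triv (P : M -> Prop) : 0 < s -> (forall t, 0 < t -> P t) -> Ev P.
Proof. intros Hs H. exists s. split; auto. split; [apply lt_irr|]. auto. Qed.

Lemma Ev_lt a : 0 < s -> 0 < a -> Ev (fun t => t < a).
Proof.
  intros Hs Ha. destruct (min_ex a s Ha Hs) as (r & Hr & Hra & Hrs).
  exists r. repeat split; auto. intros t _ Ht. eapply tr_nlt; eauto.
Qed.

Lemma Ev_pts pts : 0 < s -> Ev (fun t => ~ In t pts).
Proof.
  intro Hs. induction pts as [|q pts IH].
  - apply Ev_triv; auto.
  - assert (Hq : Ev (fun t => t <> q)).
    { destruct (classic (0 < q)) as [Hq|Hq].
      + eapply Ev_mono; [|exact (Ev_lt q Hs Hq)]. intros t _ Ht ->. exact (lt_irr M _ Ht).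
      + apply Ev_triv; auto. intros t Ht ->. auto. }
    eapply Ev_mono; [|exact (Ev_and _ _ Hq IH)]. intros t _ [H1 H2] [H|H]; auto.
Qed.

Lemma Ev_ivs (ivs : list (M * M)) : 0 < s ->
  ~ (exists p, In p ivs /\ fst p < 0 /\ 0 < snd p) ->
  Ev (fun t => exists p, In p ivs /\ fst p < t /\ t < snd p) \/
  Ev (fun t => ~ exists p, In p ivs /\ fst p < t /\ t < snd p).
Proof.
  intro Hs. induction ivs as [|p ivs IH]; intro H0.
  - right. apply Ev_triv; auto. intros t _ (p & [] & _).
  - assert (Hp : Ev (fun t => fst p < t /\ t < snd p) \/ Ev (fun t => ~ (fst p < t /\ t < snd p))).
    { destruct (lt_total M (fst p) 0) as [H|[H|H]].
      - right. apply Ev_triv; auto. intros t Ht [_ H2].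
        apply H0. exists p. split; [left; auto|]. split; auto. exact (lt_trans M _ _ _ Ht H2).
      - destruct (classic (0 < snd p)) as [H2|H2].
        + left. eapply Ev_mono; [|exact (Ev_lt _ Hs H2)]. intros t Ht Ht2. rewrite H. auto.
        + right. apply Ev_triv; auto. intros t Ht [_ H3]. apply H2. exact (lt_trans M _ _ _ Ht H3).
      - right. eapply Ev_mono; [|exact (Ev_lt _ Hs H)]. intros t _ Ht [H1 _].
        exact (lt_irr M _ (lt_trans M _ _ _ Ht H1)). }
    assert (H0' : ~ (exists p, In p ivs /\ fst p < 0 /\ 0 < snd p)).
    { intros (q & Hq & Hq2). apply H0. exists q. split; [right|]; auto. }
    destruct Hp as [Hp|Hp].
    + left. eapply Ev_mono; [|exact Hp]. intros t _ Ht. exists p. split; [left|]; auto.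
    + destruct (IH H0') as [HI|HI].
      * left. eapply Ev_mono; [|exact HI]. intros t _ (q & Hq & Hq2). exists q. split; [right|]; auto.
      * right. eapply Ev_mono; [|exact (Ev_and _ _ Hp HI)]. intros t _ [H1 H2] (q & [<-|Hq] & Hq2); auto.
        apply H2. eauto.
Qed.

Lemma dich (X : M -> Prop) : 0 < s -> (forall t, X t -> 0 < t) ->
  (exists b c, b < 0 /\ 0 < c /\ exists (pts : list M) (ivs : list (M * M)),
        forall x, (b < x /\ x < c /\ X x) <->
          (In x pts \/ exists p, In p ivs /\ fst p < x /\ x < snd p)) ->
  Ev X \/ Ev (fun t => ~ X t).
Proof.
  intros Hs HX (b & c & Hb & Hc & pts & ivs & Hiff).
  assert (H0 : ~ (exists p, In p ivs /\ fst p < 0 /\ 0 < snd p)).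
  { intro H. assert (HX0 : X 0) by (apply (proj2 (Hiff 0)); auto). exact (lt_irr M _ (HX _ HX0)). }
  destruct (Ev_ivs ivs Hs H0) as [H|H].
  - left. eapply Ev_mono; [|exact (Ev_and _ _ H (Ev_lt c Hs Hc))]. intros t Ht [H1 H2].
    assert (Hh : b < t /\ t < c /\ X t) by (apply (proj2 (Hiff t)); auto). tauto.
  - right. eapply Ev_mono; [|exact (Ev_and _ _ H (Ev_and _ _ (Ev_pts pts Hs) (Ev_lt c Hs Hc)))].
    intros t Ht [H1 [H2 H3]] HXt. destruct (proj1 (Hiff t)) as [H4|H4]; auto.
    split; [exact (lt_trans M _ _ _ Hb Ht)|auto].
Qed.
End E.

Theorem mainTheorem9 (M : OAG) (S : structure M)
  (hdc : definably_complete S) (hlom : locally_o_minimal S)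
  (n : nat) (C : list M -> Prop) (s : M) (F : list M -> M -> M)
  (hC : Def S n C) (hs : lt M (zero M) s)
  (hF : Def S (n + 2) (fun z => exists x t,
          z = x ++ [t; F x t] /\ C x /\ lt M (zero M) t /\ lt M t s))
  (hbnd : forall x, C x -> exists N, lt M (zero M) N /\
          forall t, lt M (zero M) t -> lt M t s -> abs_lt (F x t) N) :
  forall (e : M) x, lt M (zero M) e -> C x ->
    exists s', lt M (zero M) s' /\ ~ lt M s s' /\
      forall t t', lt M (zero M) t -> lt M t s' -> lt M (zero M) t' -> lt M t' s' ->
        abs_lt (sub (F x t) (F x t')) e.
Proof.
  intros e x He Cx.
  destruct (hbnd x Cx) as (N & HN0 & HN).
  destruct (classic (exists r, lt M (zero M) r /\ forall t, ~ (lt M (zero M) t /\ lt M t r)))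
    as [(r & Hr & Hno)|Hnd].
  { destruct (min_ex r s Hr hs) as (r' & Hr' & Hrr & Hrs).
    exists r'. split; [exact Hr'|]. split; [exact Hrs|].
    intros t t' Ht Htr. exfalso. apply (Hno t). split; auto. eapply tr_nlt; eauto. }
  assert (Hdense : forall r, lt M (zero M) r -> exists t, lt M (zero M) t /\ lt M t r).
  { intros r Hr. apply NNPP. intro H. apply Hnd. exists r. split; auto.
    intros t Ht. apply H. exists t. exact Ht. }
  pose proof (def_D M S n C s F hC hF x Cx) as HD.
  set (D := fun c => exists r, lt M (zero M) r /\ ~ lt M s r /\
     forall t, lt M (zero M) t -> lt M t r -> lt M c (F x t)) in HD.
  destruct (hdc D HD) as (L & HL1 & HL2).
  { exists (opp M N). exists s. split; auto. split; [apply lt_irr|].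
    intros t Ht Hts. apply (HN t Ht Hts). }
  { exists N. intros c (r & Hr & Hrs & Hall) HNc.
    destruct (Hdense r Hr) as (t & Ht & Htr).
    pose proof (Hall t Ht Htr) as Hct.
    assert (Hts : lt M t s) by (eapply tr_nlt; eauto).
    pose proof (proj2 (HN t Ht Hts)) as HtN.
    exact (lt_irr M _ (lt_trans M _ _ _ (lt_trans M _ _ _ HNc Hct) HtN)). }
  destruct (half_exists e He Hdense) as (d & Hd & Hed).
  destruct (classic (exists d', D d' /\ lt M (add M L (opp M d)) d')) as [(d' & Hd' & Hdd')|Hnd'].
  2:{ exfalso. apply (HL2 (add M L (opp M d))); [|apply sub_lt_self; exact Hd].
      intros y Hy Hlt. apply Hnd'. exists y. auto. }
  assert (HnD : ~ D (add M L d)).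
  { intro H. apply (HL1 _ H). apply lt_self_add; exact Hd. }
  pose proof (def_X M S n C s F hC hF x Cx (add M L d)) as HX.
  destruct (dich s _ hs (fun t H => proj1 H) (hlom _ (zero M) HX)) as [HEv|HEv].
  { exfalso. apply HnD. destruct HEv as (r & Hr & Hrs & Hall).
    exists r. split; auto. split; auto. intros t Ht Htr. apply (Hall t Ht Htr). }
  destruct Hd' as (r1 & Hr1 & Hr1s & Hall1).
  destruct HEv as (r2 & Hr2 & Hr2s & Hall2).
  destruct (min_ex r1 r2 Hr1 Hr2) as (s' & Hs' & Hs1 & Hs2).
  exists s'. split; [exact Hs'|]. split; [exact (nlt_trans _ _ _ Hs1 Hr1s)|].
  assert (Hgood : forall t, lt M (zero M) t -> lt M t s' ->
     lt M (add M L (opp M d)) (F x t) /\ ~ lt M (add M L d) (F x t)).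
  { intros t Ht Hts'. assert (Ht1 : lt M t r1) by exact (tr_nlt _ _ _ Hts' Hs1).
    assert (Ht2 : lt M t r2) by exact (tr_nlt _ _ _ Hts' Hs2).
    assert (Hts : lt M t s) by exact (tr_nlt _ _ _ Ht1 Hr1s).
    split.
    - exact (lt_trans M _ _ _ Hdd' (Hall1 t Ht Ht1)).
    - intro H. apply (Hall2 t Ht Ht2). auto. }
  intros t t' Ht Hts Ht' Hts'.
  destruct (Hgood t Ht Hts) as [A1 A2]. destruct (Hgood t' Ht' Hts') as [B1 B2].
  exact (abs_key L d _ _ e A1 B1 A2 B2 Hed).
Qed.
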